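(* Suppose that for every finite graph $G=(V,E)$, every ferromagnetic pair interactions $\mathbf J$ on $G$, every $k\in\mathbb N$, every $j_1,\dots,j_{2k}\in V$ (not necessarily distinct) and every $u_0v_0\in E$ with $v_0\notin\{j_1,\dots,j_{2k}\}$, one has $(-1)^{k-1}\partial u_{2k}(\sigma_{j_1},\dots,\sigma_{j_{2k}})/\partial J_{u_0v_0}\ge0$. Then for every finite graph $G$, every ferromagnetic $\mathbf J$ on $G$, every $k\in\mathbb N$, every $j_1,\dots,j_{2k}\in V$ and every $u_0v_0\in E$ with $u_0\in\{j_1,\dots,j_{2k}\}$ and $v_0\in\{j_1,\dots,j_{2k}\}$, one also has $$(-1)^{k-1}\frac{\partial u_{2k}(\sigma_{j_1},\dots,\sigma_{j_{2k}})}{\partial J_{u_0v_0}}\ge0.$$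
   Context: Ferromagnetic pair interactions: $\mathbf J=(J_e)_{e\in E}$ with $J_e\ge0$. Ising model: $\mathbb P_G(\sigma)=\exp[\sum_{uv\in E}J_{uv}\sigma_u\sigma_v]/Z_G$ on $\{-1,1\}^V$, expectation $\langle\cdot\rangle_G$. Ursell function: $u_m(\sigma_{j_1},\dots,\sigma_{j_m})=\sum_{\mathscr P}(-1)^{|\mathscr P|-1}(|\mathscr P|-1)!\prod_{P\in\mathscr P}\langle\prod_{i\in P}\sigma_{j_i}\rangle_G$, the sum over all set partitions $\mathscr P$ of $\{1,\dots,m\}$; it is regarded as a function of $\mathbf J$. *)

(* Defs.v *)
From HB Require Import structures.
From mathcomp Require Import all_boot all_order all_algebra.
From mathcomp Require Import all_classical all_reals all_analysis.
Set Implicit Arguments. Unset Strict Implicit. Unset Printing Implicit Defensive.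
Import Order.TTheory GRing.Theory Num.Theory.
Local Open Scope ring_scope.

Section Ising.
Variables (R : realType) (V : finType).

Definition simple_graph (E : {set {set V}}) : Prop :=
  forall e, e \in E -> #|e| = 2%N.

(* Ferromagnetic pair interactions: J_e >= 0 for every edge (values of J
   off E are irrelevant). *)
Definition ferromagnetic (E : {set {set V}}) (J : {set V} -> R) : Prop :=
  forall e, e \in E -> 0 <= J e.

Definition spin (b : bool) : R := if b then 1 else -1.

Definition hamil (E : {set {set V}}) (J : {set V} -> R) (s : {ffun V -> bool}) : R :=
  \sum_(e in E) J e * \prod_(x in e) spin (s x).

Definition weight E J (s : {ffun V -> bool}) : R := expR (hamil E J s).

Definition partfun E J : R := \sum_(s : {ffun V -> bool}) weight E J s.

Definition moment E J (m : nat) (j : 'I_m -> V) (B : {set 'I_m}) : R :=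
  (\sum_(s : {ffun V -> bool}) (\prod_(i in B) spin (s (j i))) * weight E J s)
  / partfun E J.

Definition ursell E J (m : nat) (j : 'I_m -> V) : R :=
  \sum_(P : {set {set 'I_m}} | finset.partition P [set: 'I_m])
     (-1) ^+ (#|P|.-1) * ((#|P|.-1)`!)%:R * \prod_(B in P) moment E J j B.

Definition updJ (J : {set V} -> R) (e0 : {set V}) (t : R) : {set V} -> R :=
  fun e => if e == e0 then t else J e.

Definition dursell E J (m : nat) (j : 'I_m -> V) (e0 : {set V}) : R :=
  derive1 (fun t => ursell E (updJ J e0 t) j) (J e0).

End Ising.

(* Main.v *)
Require Import Defs.
From HB Require Import structures.
From mathcomp Require Import all_boot all_order all_algebra.
From mathcomp Require Import lra.
From mathcomp Require Import all_classical all_reals all_analysis.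
Import Order.TTheory GRing.Theory Num.Theory.
Local Open Scope ring_scope.

Section D.
Variable R : realType.
Implicit Types (f g : R -> R) (x : R).

Lemma dcst (c x : R) : derivable (fun _ : R => c) x 1.
Proof. exact: derivable_cst. Qed.
Lemma did x : derivable (fun t : R => t) x 1.
Proof. exact: derivable_id. Qed.
Lemma dD f g x : derivable f x 1 -> derivable g x 1 -> derivable (fun t => f t + g t) x 1.
Proof. move=> a b; exact: (derivableD a b). Qed.
Lemma dM f g x : derivable f x 1 -> derivable g x 1 -> derivable (fun t => f t * g t) x 1.
Proof. move=> a b; exact: (derivableM a b). Qed.
Lemma dV f x : f x != 0 -> derivable f x 1 -> derivable (fun t => (f t)^-1) x 1.
Proof. move=> a b; exact: (derivableV a b). Qed.
Lemma dexp f x : derivable f x 1 -> derivable (fun t => expR (f t)) x 1.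
Proof.
move=> /derivable1_diffP df; apply/derivable1_diffP.
have de := proj1 (derivable1_diffP _ _) (@derivable_expR R (f x)).
exact: (differentiable_comp df de).
Qed.
Lemma dsum (I : Type) (r : seq I) (P : pred I) (F : I -> R -> R) x :
  (forall i, P i -> derivable (F i) x 1) ->
  derivable (fun t => \sum_(i <- r | P i) F i t) x 1.
Proof.
move=> h; elim: r => [|a r IH].
  under eq_fun do rewrite big_nil; exact: dcst.
under eq_fun do rewrite big_cons.
case Pa: (P a); last exact: IH.
exact: dD (h _ Pa) IH.
Qed.
Lemma dprod (I : Type) (r : seq I) (P : pred I) (F : I -> R -> R) x :
  (forall i, P i -> derivable (F i) x 1) ->
  derivable (fun t => \prod_(i <- r | P i) F i t) x 1.
Proof.
move=> h; elim: r => [|a r IH].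
  under eq_fun do rewrite big_nil; exact: dcst.
under eq_fun do rewrite big_cons.
case Pa: (P a); last exact: IH.
exact: dM (h _ Pa) IH.
Qed.
Lemma dZ f (c x : R) : derivable f x 1 ->
  derive1 (fun t => c * f t) x = c * derive1 f x.
Proof.
move=> df; rewrite !derive1E.
have -> : (fun t => c * f t) = c \*: f by apply/funext => t.
by rewrite deriveZ.
Qed.

Lemma partfun_gt0 (V : finType) E (J : {set V} -> R) : 0 < partfun E J.
Proof.
rewrite /partfun (bigD1 [ffun=> true]) //=.
apply: ltr_wpDr; last exact: expR_gt0.
by apply: sumr_ge0 => s _; exact: expR_ge0.
Qed.

Lemma d_hamil (V : finType) E (J : {set V} -> R) e0 s x :
  derivable (fun t => hamil E (updJ J e0 t) s) x 1.
Proof.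
apply: dsum => e _; rewrite /updJ; case: (e == e0).
  exact: dM (did _) (dcst _ _).
exact: dcst.
Qed.

Lemma d_moment (V : finType) E (J : {set V} -> R) e0 m (j : 'I_m -> V) B x :
  derivable (fun t => moment E (updJ J e0 t) j B) x 1.
Proof.
rewrite /moment; apply: dM.
  apply: dsum => s _; apply: dM; first exact: dcst.
  exact/dexp/d_hamil.
apply: dV; first by rewrite gt_eqF // partfun_gt0.
by apply: dsum => s _; exact/dexp/d_hamil.
Qed.

Lemma d_ursell (V : finType) E (J : {set V} -> R) e0 m (j : 'I_m -> V) x :
  derivable (fun t => ursell E (updJ J e0 t) j) x 1.
Proof.
rewrite /ursell; apply: dsum => P _; apply: dM; first exact: dcst.
by apply: dprod => B _; exact: d_moment.
Qed.
End D.
Section Cons.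
Variables (R : realType) (V : finType) (E : {set {set V}}) (m : nat)
  (j : 'I_m -> V) (v0 : V) (K : R).
Notation V' := (V + 'I_m)%type.
Definition lf (i : 'I_m) : {set V'} := [set inl v0; inr i].
Definition leaves : {set {set V'}} := [set lf i | i : 'I_m].
Definition emb (e : {set V}) : {set V'} := inl @: e.
Definition E' : {set {set V'}} := emb @: E :|: leaves.
Definition Jext (J : {set V} -> R) (e' : {set V'}) : R :=
  if e' \in leaves then K else J (inl @^-1: e').
Definition j' (i : 'I_m) : V' := if j i == v0 then inr i else inl (j i).
Definition glue (p : {ffun V -> bool} * {ffun 'I_m -> bool}) : {ffun V' -> bool} :=
  [ffun x => match x with inl v => p.1 v | inr i => p.2 i end].

Lemma inl_inj : injective (@inl V 'I_m). Proof. by move=> a b []. Qed.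

Lemma inl_notin_leaves (e : {set V}) : inl @: e \notin leaves.
Proof.
apply/imsetP => -[i _ h].
have : (inr i : V') \in inl @: e by rewrite h !inE eqxx orbT.
by case/imsetP.
Qed.

Lemma preim_im (e : {set V}) : inl @^-1: (inl @: e : {set V'}) = e.
Proof.
apply/setP => x; rewrite inE; apply/imsetP/idP => [[y ye /inl_inj -> //]|xe].
by exists x.
Qed.

Lemma lf_inj : injective lf.
Proof.
move=> a b h; have : (inr a : V') \in lf b by rewrite -h !inE eqxx orbT.
by rewrite !inE => /orP[//|/eqP [->]].
Qed.

Lemma hamil_glue (J : {set V} -> R) s r :
  hamil E' (Jext J) (glue (s, r)) =
  hamil E J s + \sum_i K * (spin R (s v0) * spin R (r i)).
Proof.
rewrite /hamil /E' (eq_bigl [predU emb @: E & leaves]); last by move=> e; rewrite !inE.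
rewrite bigU /=; last first.
  apply/pred0P => e /=; apply/negbTE/negP => /andP[/imsetP[e1 _ ->]].
  by rewrite (negbTE (inl_notin_leaves e1)).
congr (_ + _).
  rewrite big_imset /=; last by move=> e1 e2 _ _ h; exact: (imset_inj inl_inj h).
  apply: eq_bigr => e _; rewrite /emb /Jext (negbTE (inl_notin_leaves e)) preim_im.
  congr (_ * _); rewrite big_imset /=; last by move=> a b _ _; exact: inl_inj.
  by apply: eq_bigr => v _; rewrite ffunE.
rewrite big_imset /=; last by move=> a b _ _; exact: lf_inj.
apply: eq_bigr => i _; rewrite /Jext ifT; last by apply/imsetP; exists i.
rewrite /lf big_setU1 ?big_set1 ?ffunE //=.
by rewrite !inE.
Qed.

Definition unglue (s' : {ffun V' -> bool}) : {ffun V -> bool} * {ffun 'I_m -> bool} :=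
  ([ffun v => s' (inl v)], [ffun i => s' (inr i)]).

Lemma glueK : cancel glue unglue.
Proof. by case=> s r; rewrite /unglue; congr pair; apply/ffunP => x; rewrite !ffunE. Qed.
Lemma unglueK : cancel unglue glue.
Proof. by move=> s'; apply/ffunP => -[v|i]; rewrite !ffunE. Qed.

Definition CC := expR K + expR (- K).
Definition DD := expR K - expR (- K).
Definition cB (B : {set 'I_m}) i := if (i \in B) && (j i == v0) then DD else CC.

Lemma sum_bool_i (B : {set 'I_m}) (s : {ffun V -> bool}) i :
  \sum_(b : bool) ((if i \in B then (if j i == v0 then spin R b else spin R (s (j i))) else 1)
       * expR (K * (spin R (s v0) * spin R b)))
  = (if i \in B then spin R (s (j i)) else 1) * cB B i.
Proof.
rewrite big_bool /cB /CC /DD /spin.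
have e1 : K * (1 * 1) = K by rewrite !mulr1.
have e2 : K * (1 * -1) = - K by rewrite mul1r mulrN1.
have e3 : K * (-1 * 1) = - K by rewrite mulr1 mulrN1.
have e4 : K * (-1 * -1) = K by rewrite mulrNN !mulr1.
case: (i \in B) => /=; case Ej: (j i == v0); rewrite ?(eqP Ej) /=; case: (s v0) => /=;
  rewrite ?e1 ?e2 ?e3 ?e4; try case: (s (j i)); lra.
Qed.

Lemma num_glue (J : {set V} -> R) (B : {set 'I_m}) :
  \sum_(s' : {ffun V' -> bool}) (\prod_(i in B) spin R (s' (j' i))) * weight E' (Jext J) s'
  = (\sum_(s : {ffun V -> bool}) (\prod_(i in B) spin R (s (j i))) * weight E J s)
    * \prod_i cB B i.
Proof.
rewrite (reindex glue); last by apply: onW_bij; exists unglue; [exact: glueK|exact: unglueK].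
rewrite (eq_bigr (fun p => (\prod_(i in B) spin R (glue (p.1, p.2) (j' i)))
   * weight E' (Jext J) (glue (p.1, p.2)))); last by case.
rewrite -(pair_bigA _ (fun s r => (\prod_(i in B) spin R (glue (s, r) (j' i)))
   * weight E' (Jext J) (glue (s, r)))) /= mulr_suml.
apply: eq_bigr => s _.
transitivity (weight E J s * \sum_(r : {ffun 'I_m -> bool}) \prod_i
   ((if i \in B then (if j i == v0 then spin R (r i) else spin R (s (j i))) else 1)
       * expR (K * (spin R (s v0) * spin R (r i))))).
  rewrite mulr_sumr; apply: eq_bigr => r _.
  rewrite /weight hamil_glue expRD expR_sum big_split /= -big_mkcond /=.
  rewrite mulrCA; congr (_ * (_ * _)).
  1-2: first [by rewrite expR_sum | apply: eq_bigr => i _; rewrite /j'; case: eqP => _; by rewrite ffunE].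
set F := fun i (b : bool) => (if i \in B then (if j i == v0 then spin R b else spin R (s (j i))) else 1)
       * expR (K * (spin R (s v0) * spin R b)).
have -> : \sum_(r : {ffun 'I_m -> bool}) \prod_i F i (r i) = \prod_i \sum_(b : bool) F i b.
  by rewrite bigA_distr_bigA.
rewrite /F.
rewrite (eq_bigr _ (fun i _ => sum_bool_i B s i)) big_split /= -big_mkcond /=.
by rewrite mulrA [weight _ _ _ * _]mulrC.
Qed.

Lemma CC_gt0 : 0 < CC.
Proof. by rewrite /CC addr_gt0 // expR_gt0. Qed.

Definition w i := if j i == v0 then DD / CC else 1.

Lemma partfun_num {V0 : finType} (E0 : {set {set V0}}) (J : {set V0} -> R) (jj : 'I_m -> V0) :
  partfun E0 J = \sum_(s : {ffun V0 -> bool}) (\prod_(i in finset.set0) spin R (s (jj i))) * weight E0 J s.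
Proof. by rewrite /partfun; apply: eq_bigr => s _; rewrite big_set0 mul1r. Qed.

Lemma moment_glue (J : {set V} -> R) (B : {set 'I_m}) :
  moment E' (Jext J) j' B = moment E J j B * \prod_(i in B) w i.
Proof.
rewrite /moment num_glue (partfun_num E' (Jext J) j') num_glue -partfun_num.
have -> : \prod_(i < m) cB finset.set0 i = \prod_(i < m) CC by apply: eq_bigr => i _; rewrite /cB inE.
have hC : CC != 0 by rewrite gt_eqF // CC_gt0.
have hP : \prod_(i < m) CC != 0 by rewrite prodf_seq_neq0; apply/allP => i _.
have hZ : partfun E J != 0 by rewrite gt_eqF // partfun_gt0.
rewrite invfM mulrACA; congr (_ * _).
rewrite -prodf_div [RHS]big_mkcond /=; apply: eq_bigr => i _.
rewrite /cB /w; case: (i \in B) => /=; last by rewrite divff.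
by case: (j i == v0) => //; rewrite divff.
Qed.

Lemma ursell_glue (J : {set V} -> R) :
  ursell E' (Jext J) j' = ursell E J j * \prod_i w i.
Proof.
rewrite /ursell mulr_suml; apply: eq_bigr => P hP.
have tP : finset.trivIset P by case/and3P: hP.
have h := @finset.big_trivIset _ R 1 *%R P w tP; rewrite /= in h.
have hs : \prod_(x in [set: 'I_m]) w x = \prod_x w x by apply: eq_bigl => x; rewrite inE.
rewrite (eq_bigr _ (fun B _ => moment_glue J B)) big_split /=.
by rewrite -h (cover_partition hP) hs !mulrA.
Qed.
End Cons.

Lemma ursell_ext (R : realType) (V : finType) (E : {set {set V}}) (J1 J2 : {set V} -> R)
  m (j : 'I_m -> V) :
  (forall e, e \in E -> J1 e = J2 e) -> ursell E J1 j = ursell E J2 j.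
Proof.
move=> h; have hh : hamil E J1 = hamil E J2.
  by apply/funext => s; apply: eq_bigr => e eE; rewrite h.
by rewrite /ursell /moment /partfun /weight hh.
Qed.

Lemma updJ_ext (R : realType) (V : finType) (E : {set {set V}}) m (v0 : V) (K : R)
  (J : {set V} -> R) e0 t :
  forall e', e' \in E' V E m v0 ->
  updJ (Jext R V m v0 K J) (emb V m e0) t e' = Jext R V m v0 K (updJ J e0 t) e'.
Proof.
move=> e'; rewrite inE => /orP[/imsetP[e eE ->]|lv].
  rewrite /updJ /Jext (negbTE (inl_notin_leaves _ _ _ e)) preim_im.
  by rewrite (inj_eq (imset_inj (@inl_inj V m))).
have ne : (e' == emb V m e0) = false.
  apply/eqP => h; move: lv; rewrite h.
  by rewrite (negbTE (inl_notin_leaves _ _ _ e0)).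
by rewrite /updJ /Jext ne lv.
Qed.

Theorem mainTheorem11 (R : realType) :
  (forall (V : finType) (E : {set {set V}}) (J : {set V} -> R)
          (k : nat) (j : 'I_(k.*2) -> V) (u0 v0 : V),
      simple_graph E -> ferromagnetic E J -> (0 < k)%N ->
      [set u0; v0] \in E -> (forall i, j i != v0) ->
      0 <= (-1) ^+ k.-1 * dursell E J j [set u0; v0]) ->
  (forall (V : finType) (E : {set {set V}}) (J : {set V} -> R)
          (k : nat) (j : 'I_(k.*2) -> V) (u0 v0 : V),
      simple_graph E -> ferromagnetic E J -> (0 < k)%N ->
      [set u0; v0] \in E -> (exists i, j i = u0) -> (exists i, j i = v0) ->
      0 <= (-1) ^+ k.-1 * dursell E J j [set u0; v0]).
Proof.
move=> H V E J k j u0 v0 hs hf hk hE _ _.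
set e0 := [set u0; v0].
have he : [set (inl u0 : (V + 'I_(k.*2))%type); inl v0] = emb V (k.*2) e0.
  by rewrite /emb imsetU1 imset_set1.
set c := \prod_i w R V (k.*2) j v0 1 i.
have cpos : 0 < c.
  apply: prodr_gt0 => i _; rewrite /w; case: (j i == v0) => //.
  apply: divr_gt0; last exact: CC_gt0.
  by rewrite /DD subr_gt0 ltr_expR; lra.
have key : (fun t => ursell (E' V E (k.*2) v0)
                 (updJ (Jext R V (k.*2) v0 1 J) (emb V (k.*2) e0) t) (j' V (k.*2) j v0))
           = (fun t => c * ursell E (updJ J e0 t) j).
  apply/funext => t.
  rewrite (@ursell_ext R _ _ _ _ _ _ (updJ_ext R V E (k.*2) v0 1 J e0 t)) ursell_glue.
  by rewrite mulrC.
have Jv : Jext R V (k.*2) v0 1 J (emb V (k.*2) e0) = J e0.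
  by rewrite /Jext (negbTE (inl_notin_leaves _ _ _ e0)) preim_im.
have := H (V + 'I_(k.*2))%type (E' V E (k.*2) v0) (Jext R V (k.*2) v0 1 J) k
  (j' V (k.*2) j v0) (inl u0) (inl v0).
rewrite he /dursell key Jv dZ; last exact: d_ursell.
rewrite mulrCA pmulr_rge0 //; apply.
- move=> e'; rewrite inE => /orP[/imsetP[e eE ->]|/imsetP[i _ ->]].
    by rewrite /emb card_imset ?hs //; exact: inl_inj.
  by rewrite /lf cards2.
- move=> e'; rewrite inE => /orP[/imsetP[e eE ->]|lv].
    by rewrite /Jext (negbTE (inl_notin_leaves _ _ _ e)) preim_im hf.
  by rewrite /Jext lv.
- exact: hk.
- by rewrite inE; apply/orP; left; apply/imsetP; exists e0.
- move=> i; rewrite /j'; case: (j i =P v0) => // ne.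
  by apply/eqP => -[].
Qed.
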